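(* Let $v\ge 1$, $\epsilon>0$, and let $z\in[0,1]^v$. Suppose we are given real values $\hat f_s$, one for each $s\in\{0,1\}^v$, satisfying $\left|\hat f_s-\frac1v\langle s,z\rangle\right|\le\epsilon$ for all $s\in\{0,1\}^v$. Then it is possible, using only the values $\{\hat f_s\}$, to identify a vector $\hat z\in[0,1]^v$ satisfying $\frac1v\|\hat z-z\|_1\le 4\epsilon$.
   Context: $\langle s,z\rangle=\sum_{i=1}^v s_iz_i$. In the paper $z=(f_T(\mathcal{D}_1),\dots,f_T(\mathcal{D}_v))$ is the vector of frequencies of a fixed itemset $T$ in $v$ databases, and $\hat f_s$ are approximate answers to associated itemset queries, but the statement only uses $z\in[0,1]^v$. *)

(* Defs.v *)
From mathcomp Require Import all_boot all_order all_algebra.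
Set Implicit Arguments. Unset Strict Implicit. Unset Printing Implicit Defensive.
Import Order.TTheory GRing.Theory Num.Theory.
Local Open Scope ring_scope.

Definition inner (R : ringType) (v : nat) (s : {ffun 'I_v -> bool}) (z : 'I_v -> R) : R :=
  \sum_(i < v) (s i)%:R * z i.

Definition l1norm (R : numDomainType) (v : nat) (x : 'I_v -> R) : R :=
  \sum_(i < v) `|x i|.

(* Main.v *)
Require Import Defs.
From mathcomp Require Import all_boot all_order all_algebra.
From Stdlib Require Import ClassicalEpsilon.
From mathcomp Require Import lra ring.
Import Order.TTheory GRing.Theory Num.Theory.
Local Open Scope ring_scope.

Lemma innerB (R : realFieldType) (v : nat) s (a b : 'I_v -> R) :
  inner s a - inner s b = inner s (fun i => a i - b i).
Proof.
rewrite /inner -sumrB; apply: eq_bigr => i _; by rewrite mulrBr.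
Qed.

Theorem lemma4 (R : realFieldType) (v : nat) (eps : R) :
  (1 <= v)%N -> 0 < eps ->
  exists D : ({ffun 'I_v -> bool} -> R) -> ('I_v -> R),
    forall (z : 'I_v -> R) (fhat : {ffun 'I_v -> bool} -> R),
      (forall i, 0 <= z i <= 1) ->
      (forall s, `|fhat s - v%:R^-1 * inner s z| <= eps) ->
      (forall i, 0 <= D fhat i <= 1) /\
      v%:R^-1 * l1norm (fun i => D fhat i - z i) <= 4 * eps.
Proof.
move=> v1 eps0.
pose P (fhat : {ffun 'I_v -> bool} -> R) (x : 'I_v -> R) :=
  (forall i, 0 <= x i <= 1) /\ (forall s, `|fhat s - v%:R^-1 * inner s x| <= eps).
exists (fun fhat => epsilon (inhabits (fun _ : 'I_v => 0 : R)) (P fhat)).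
move=> z fhat Hz Hf.
have [H1 H2] : P fhat (epsilon (inhabits (fun _ : 'I_v => 0 : R)) (P fhat)).
  by apply: epsilon_spec; exists z.
split=> //.
set zh := epsilon _ _ in H1 H2 *.
set w := fun i => zh i - z i.
have vpos : 0 < v%:R :> R by rewrite ltr0n.
have key : forall s, `|inner s w| <= 2 * eps * v%:R.
  move=> s; rewrite /w -innerB.
  have : `|v%:R^-1 * inner s zh - v%:R^-1 * inner s z| <= 2 * eps.
    have a := Hf s; have b := H2 s.
    rewrite distrC in b.
    apply: le_trans (ler_distD (fhat s) _ _) _.
    have := lerD a b; lra.
  rewrite -mulrBr normrM gtr0_norm ?invr_gt0 // => h.
  have := ler_wpM2l (ltW vpos) h.
  by rewrite mulrA divff ?lt0r_neq0 // mul1r mulrC.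
pose sp := [ffun i => 0 <= w i].
pose sn := [ffun i => w i < 0].
have eq : l1norm w = inner sp w - inner sn w.
  rewrite /l1norm /inner -sumrB; apply: eq_bigr => i _; rewrite !ffunE.
  case: (leP 0 (w i)) => h; first by rewrite ger0_norm // mul1r mul0r subr0.
  by rewrite ltr0_norm // mul0r mul1r sub0r.
rewrite -/w eq mulrC ler_pdivrMr //.
have k1 := le_trans (ler_norm _) (key sp).
have k2 := le_trans (ler_norm _) (key sn).

have k3 : - inner sn w <= 2 * eps * v%:R.
  by apply: le_trans (key sn); rewrite -normrN ler_norm.
apply: le_trans (lerD k1 k3) _.
rewrite -mulrDl -mulrDl. have -> : (2 + 2 : R) = 4 by rewrite -!natrD. by [].
Qed.
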